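(* Let $p$ be a prime, $A$ a commutative ring with $\mathbb{Q}\subseteq A$, and $|$ a $p$-archimedean $p$-divisibility on $A$. For $a\in A$ put $\mathrm{ord}\,a=\sup\{m\in\mathbb{Z};\ p^m|a\}\in\mathbb{Z}\cup\{\infty\}$ and $\|a\|=p^{-\mathrm{ord}\,a}$ (with $p^{-\infty}=0$). Then for all $a,b\in A$ and $r\in\mathbb{Q}$: (a) $\|a+b\|\le\max(\|a\|,\|b\|)$; (b) $\|ab\|\le\|a\|\,\|b\|$; (c) $\|r\|=|r|_p$; (d) $\|ra\|=|r|_p\|a\|$.
   Context: A divisibility on $A$ is a binary relation $|\subseteq A\times A$ such that for all $a,b,c$: (1) $a|a$; (2) $a|b,\ b|c\Rightarrow a|c$; (3) $a|b,\ a|c\Rightarrow a|b-c$; (4) $a|b\Rightarrow ac|bc$; (5) $0\nmid1$. A $p$-divisibility additionally satisfies for all $a,b$: (6) $0\nmid a\Rightarrow pa\nmid a$; (7) $p[(a^pb-b^pa)^2-(b^{p+1})^2]\ \big|\ (a^pb-b^pa)b^{p+1}$. It is $p$-archimedean if for every $a$ there is $m\in\mathbb{Z}$ with $p^m|a$. $|r|_p=p^{-v_p(r)}$ is the $p$-adic absolute value. *)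

(* Defs.v *)
From mathcomp Require Import all_boot all_order all_algebra.
From Stdlib Require Import ClassicalEpsilon.
Set Implicit Arguments. Unset Strict Implicit. Unset Printing Implicit Defensive.
Import Order.TTheory GRing.Theory Num.Theory.
Local Open Scope ring_scope.

Section Divisibility.
Variables (A : comUnitRingType) (p : nat) (dv : A -> A -> Prop).

Definition divisibility : Prop :=
  [/\ (forall a, dv a a),
      (forall a b c, dv a b -> dv b c -> dv a c),
      (forall a b c, dv a b -> dv a c -> dv a (b - c)),
      (forall a b c, dv a b -> dv (a * c) (b * c)) &
      ~ dv 0 1].

Definition p_divisibility : Prop :=
  [/\ divisibility,
      (forall a, ~ dv 0 a -> ~ dv (p%:R * a) a) &
      (forall a b : A,
         dv (p%:R * ((a ^+ p * b - b ^+ p * a) ^+ 2 - (b ^+ p.+1) ^+ 2))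
            ((a ^+ p * b - b ^+ p * a) * b ^+ p.+1))].

(* p ^ m for m : int, computed in A (p is a unit when Q ⊆ A) *)
Definition ppow (m : int) : A := (p%:R : A) ^ m.

Definition p_archimedean : Prop := forall a : A, exists m : int, dv (ppow m) a.

Definition is_max_ord (a : A) (m : int) : Prop :=
  dv (ppow m) a /\ forall m' : int, dv (ppow m') a -> m' <= m.

(* ord a = sup {m in Z ; p^m | a} in Z ∪ {oo}; None stands for oo.
   (For a p-archimedean divisibility the set is nonempty, so the sup is
   either a maximum or +oo.) *)
Definition ord (a : A) : option int :=
  match excluded_middle_informative (exists m, is_max_ord a m) with
  | left H => Some (proj1_sig (constructive_indefinite_description _ H))
  | right _ => None
  end.

Definition pnorm (a : A) : rat :=
  match ord a with
  | Some m => (p%:R : rat) ^ (- m)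
  | None => 0
  end.

End Divisibility.

Definition padic_val (p : nat) (r : rat) : int :=
  (logn p `|numq r|%N)%:Z - (logn p `|denq r|%N)%:Z.

Definition padic_abs (p : nat) (r : rat) : rat :=
  if r == 0 then 0 else (p%:R : rat) ^ (- padic_val p r).

(* Main.v *)
Require Import Defs.
From mathcomp Require Import all_boot all_order all_algebra.
From mathcomp Require Import ring.
From Stdlib Require Import Classical ClassicalEpsilon.
Import Order.TTheory GRing.Theory Num.Theory.
Local Open Scope ring_scope.
Set Implicit Arguments. Unset Strict Implicit.

Lemma D0 (A : comUnitRingType) (dv : A -> A -> Prop) (hd : divisibility dv) a :
  dv a 0.
Proof. case: hd => h1 _ h3 _ _. by rewrite -(subrr a); apply: h3; apply: h1. Qed.

Lemma DN (A : comUnitRingType) (dv : A -> A -> Prop) (hd : divisibility dv) a b :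
  dv a b -> dv a (- b).
Proof. move=> h; rewrite -sub0r. case: (hd) => _ _ h3 _ _. by apply: h3 => //; apply: D0. Qed.

Lemma DD (A : comUnitRingType) (dv : A -> A -> Prop) (hd : divisibility dv) a b c :
  dv a b -> dv a c -> dv a (b + c).
Proof. move=> hb hc; rewrite -(opprK c). case: (hd) => _ _ h3 _ _. by apply: h3 => //; apply: DN. Qed.

Lemma DT (A : comUnitRingType) (dv : A -> A -> Prop) (hd : divisibility dv) a b c :
  dv a b -> dv b c -> dv a c.
Proof. by case: hd => _ h2 _ _ _; apply: h2. Qed.

Lemma DMr (A : comUnitRingType) (dv : A -> A -> Prop) (hd : divisibility dv) a b c :
  dv a b -> dv (a * c) (b * c).
Proof. by case: hd => _ _ _ h4 _; apply: h4. Qed.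

Lemma D1n (A : comUnitRingType) (dv : A -> A -> Prop) (hd : divisibility dv) (n : nat) :
  dv 1 (n%:R).
Proof.
elim: n => [|n IH]; first exact: D0.
rewrite mulrS addrC; apply: DD => //. by case: hd.
Qed.

Lemma D1z (A : comUnitRingType) (dv : A -> A -> Prop) (hd : divisibility dv) (z : int) :
  dv 1 (z%:~R).
Proof.
case: z => n; first exact: D1n.
rewrite NegzE rmorphN /=; apply: DN => //. exact: D1n.
Qed.

Lemma D1M (A : comUnitRingType) (dv : A -> A -> Prop) (hd : divisibility dv) x y :
  dv 1 x -> dv 1 y -> dv 1 (x * y).
Proof.
move=> hx hy; apply: DT hy _ => //.
have := DMr hd y hx; by rewrite mul1r.
Qed.

Lemma DmulR (A : comUnitRingType) (dv : A -> A -> Prop) (hd : divisibility dv) a b c :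
  dv 1 c -> dv a b -> dv a (b * c).
Proof.
move=> hc hab; apply: DT (DMr hd c hab) => //.
have := DMr hd a hc; by rewrite mul1r mulrC.
Qed.

Lemma Dscale (A : comUnitRingType) (dv : A -> A -> Prop) (hd : divisibility dv) x y c w :
  c * w = 1 -> (dv x y <-> dv (x * c) (y * c)).
Proof.
move=> hcw; split; first exact: DMr.
move=> h; have := DMr hd w h; by rewrite -!mulrA hcw !mulr1.
Qed.

Lemma Dunit1 (A : comUnitRingType) (dv : A -> A -> Prop) (hd : divisibility dv) x y u w :
  u * w = 1 -> dv 1 u -> dv 1 w -> (dv x y <-> dv x (u * y)).
Proof.
move=> huw hu hw; split => h.
  by rewrite mulrC; apply: DmulR.
have := DmulR hd hw h; by rewrite mulrAC huw mul1r.
Qed.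

Lemma natr_unit (A : comUnitRingType) (hQ : forall n : nat, (n.+1%:R : A) \is a GRing.unit) n :
  (0 < n)%N -> (n%:R : A) \is a GRing.unit.
Proof. by case: n => // n _; apply: hQ. Qed.

Lemma ppowD (A : comUnitRingType) (p : nat) (hp : prime p)
  (hQ : forall n : nat, (n.+1%:R : A) \is a GRing.unit) m n :
  ppow A p (m + n) = ppow A p m * ppow A p n.
Proof. rewrite /ppow exprzDr //; apply: (natr_unit hQ); exact: prime_gt0. Qed.

Lemma ppow_dvd (A : comUnitRingType) (p : nat) (hp : prime p)
  (hQ : forall n : nat, (n.+1%:R : A) \is a GRing.unit)
  (dv : A -> A -> Prop) (hd : divisibility dv) m n :
  m <= n -> dv (ppow A p m) (ppow A p n).
Proof.
move=> hmn; have -> : n = m + (n - m) by rewrite addrCA subrr addr0.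
rewrite ppowD //; apply: DmulR => //; first last.
  by case: hd.
have : 0 <= n - m by rewrite subr_ge0.
case: (n - m) => // k _; rewrite /ppow; have -> : (p%:R : A) ^ (Posz k) = (p ^ k)%:R by rewrite natrX. exact: D1n.
Qed.

Lemma ppow_down (A : comUnitRingType) (p : nat) (hp : prime p)
  (hQ : forall n : nat, (n.+1%:R : A) \is a GRing.unit)
  (dv : A -> A -> Prop) (hd : divisibility dv) m n a :
  m <= n -> dv (ppow A p n) a -> dv (ppow A p m) a.
Proof. move=> hmn; apply: DT => //; exact: ppow_dvd. Qed.

Lemma pnorm_some (A : comUnitRingType) (p : nat) (dv : A -> A -> Prop) a m :
  is_max_ord p dv a m -> pnorm p dv a = (p%:R : rat) ^ (- m).
Proof.
move=> hm; rewrite /pnorm /ord.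
case: excluded_middle_informative => [H|H]; last by exfalso; apply: H; exists m.
case: constructive_indefinite_description => m' /= [h1 h2].
have -> // : m' = m.
case: hm => h3 h4; apply/eqP; rewrite eq_le; apply/andP; split; [exact: h4|exact: h2].
Qed.

Lemma pnorm_none (A : comUnitRingType) (p : nat) (dv : A -> A -> Prop) a :
  (forall m, dv (ppow A p m) a) -> pnorm p dv a = 0.
Proof.
move=> hall; rewrite /pnorm /ord.
case: excluded_middle_informative => [H|H] //.
case: constructive_indefinite_description => m' /= [h1 h2].
have := h2 (m' + 1) (hall _); by rewrite gerDl.
Qed.

Lemma ord_cases (A : comUnitRingType) (p : nat) (hp : prime p)
  (hQ : forall n : nat, (n.+1%:R : A) \is a GRing.unit)
  (dv : A -> A -> Prop) (hd : divisibility dv) (harch : p_archimedean p dv) a :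
  (exists m, is_max_ord p dv a m) \/ (forall m, dv (ppow A p m) a).
Proof.
case: (classic (exists m, is_max_ord p dv a m)) => H; [by left| right].
case: (harch a) => m0 h0.
have hk : forall k : nat, dv (ppow A p (m0 + k%:Z)) a.
  elim=> [|k IH]; first by rewrite addr0.
  apply: NNPP => hn; apply: H; exists (m0 + k%:Z); split => // m' hm'.
  rewrite leNgt; apply/negP => hlt; apply: hn.
  apply: (ppow_down hp hQ hd _ hm').
  by rewrite -[k.+1]addn1 PoszD addrA lezD1.
move=> m; case: (lerP m m0) => hm.
  exact: (ppow_down hp hQ hd hm h0).
have -> : m = m0 + `|m - m0|%N%:Z.
  rewrite gez0_abs ?subr_ge0 ?ltW //. by rewrite addrCA subrr addr0.
exact: hk.
Qed.

Lemma lml (x y : rat) : x <= Num.max x y. Proof. by rewrite le_max lexx. Qed.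
Lemma lmr (x y : rat) : y <= Num.max x y. Proof. by rewrite le_max lexx orbT. Qed.

Lemma prat_mono (p : nat) (hp : prime p) (m n : int) :
  m <= n -> (p%:R : rat) ^ (- n) <= (p%:R : rat) ^ (- m).
Proof.
move=> hmn.
have hu : (p%:R : rat) \is a GRing.unit by rewrite unitfE pnatr_eq0 -lt0n prime_gt0.
have -> : - m = - n + (n - m) by rewrite addrA addNr add0r.
rewrite exprzDr //.
have hge : 0 <= n - m by rewrite subr_ge0.
have h0 : 0 <= (p%:R : rat) ^ (- n) by apply: exprz_ge0; rewrite ler0n.
rewrite -{1}[_ ^ (- n)]mulr1 ler_wpM2l //.
case: (n - m) hge => // k _ /=.
apply: exprn_ege1; rewrite ler1n; exact: prime_gt0.
Qed.

Lemma pnorm_ge0 (A : comUnitRingType) (p : nat) (dv : A -> A -> Prop) a :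
  0 <= pnorm p dv a.
Proof. rewrite /pnorm; case: ord => // m; apply: exprz_ge0; by rewrite ler0n. Qed.

Lemma pnorm_le (A : comUnitRingType) (p : nat) (hp : prime p)
  (hQ : forall n : nat, (n.+1%:R : A) \is a GRing.unit)
  (dv : A -> A -> Prop) (hd : divisibility dv) (harch : p_archimedean p dv) a n :
  dv (ppow A p n) a -> pnorm p dv a <= (p%:R : rat) ^ (- n).
Proof.
move=> h; case: (ord_cases hp hQ hd harch a) => [[m hm]|hall].
  rewrite (pnorm_some hm); apply: prat_mono => //; by case: hm => _; apply.
rewrite (pnorm_none hall); apply: exprz_ge0; by rewrite ler0n.
Qed.

Lemma part_a (A : comUnitRingType) (p : nat) (hp : prime p)
  (hQ : forall n : nat, (n.+1%:R : A) \is a GRing.unit)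
  (dv : A -> A -> Prop) (hd : divisibility dv) (harch : p_archimedean p dv) a b :
  pnorm p dv (a + b) <= Num.max (pnorm p dv a) (pnorm p dv b).
Proof.
case: (ord_cases hp hQ hd harch a) => [[m hm]|hall].
  case: (ord_cases hp hQ hd harch b) => [[n hn]|hallb].
    rewrite (pnorm_some hm) (pnorm_some hn).
    case: (lerP m n) => hmn.
      apply: le_trans (lml _ _).
      apply: pnorm_le => //; apply: DD => //; first by case: hm.
      by apply: (ppow_down hp hQ hd hmn); case: hn.
    apply: le_trans (lmr _ _).
    apply: pnorm_le => //; apply: DD => //; last by case: hn.
    by apply: (ppow_down hp hQ hd (ltW hmn)); case: hm.
  rewrite (pnorm_some hm); apply: le_trans (lml _ _).
  apply: pnorm_le => //; apply: DD => //; by case: hm.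
rewrite (pnorm_none hall).
case: (ord_cases hp hQ hd harch b) => [[n hn]|hallb].
  rewrite (pnorm_some hn); apply: le_trans (lmr _ _).
  apply: pnorm_le => //; apply: DD => //; by case: hn.
rewrite (pnorm_none hallb) maxxx pnorm_none //.
by move=> m; apply: DD.
Qed.

Lemma dvM (A : comUnitRingType) (p : nat) (hp : prime p)
  (hQ : forall n : nat, (n.+1%:R : A) \is a GRing.unit)
  (dv : A -> A -> Prop) (hd : divisibility dv) a b m n :
  dv (ppow A p m) a -> dv (ppow A p n) b -> dv (ppow A p (m + n)) (a * b).
Proof.
move=> ha hb; rewrite ppowD //; apply: DT (DMr hd (ppow A p n) ha) _ => //.
rewrite [a * _]mulrC [a * b]mulrC; exact: DMr.
Qed.

Lemma part_b (A : comUnitRingType) (p : nat) (hp : prime p)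
  (hQ : forall n : nat, (n.+1%:R : A) \is a GRing.unit)
  (dv : A -> A -> Prop) (hd : divisibility dv) (harch : p_archimedean p dv) a b :
  pnorm p dv (a * b) <= pnorm p dv a * pnorm p dv b.
Proof.
case: (ord_cases hp hQ hd harch a) => [[m hm]|hall].
  case: (ord_cases hp hQ hd harch b) => [[n hn]|hallb].
    rewrite (pnorm_some hm) (pnorm_some hn).
    have hu : (p%:R : rat) \is a GRing.unit by rewrite unitfE pnatr_eq0 -lt0n prime_gt0.
    rewrite -exprzDr // -opprD; apply: pnorm_le => //.
    by apply: dvM => //; [case: hm | case: hn].
  rewrite (pnorm_none hallb) mulr0 pnorm_none // => k.
  have -> : k = m + (k - m) by rewrite addrCA subrr addr0.
  by apply: dvM => //; case: hm.
rewrite (pnorm_none hall) mul0r pnorm_none // => k.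
case: (harch b) => n hn.
have -> : k = (k - n) + n by rewrite subrK.
exact: dvM.
Qed.

Lemma inv1 (A : comUnitRingType) (p : nat) (hp : prime p)
  (hQ : forall n : nat, (n.+1%:R : A) \is a GRing.unit)
  (dv : A -> A -> Prop) (hd : divisibility dv) (harch : p_archimedean p dv) (m : nat) :
  (0 < m)%N -> coprime p m -> dv 1 ((m%:R : A)^-1).
Proof.
move=> m0 hcop.
have hmu := natr_unit hQ m0.
case: (harch (m%:R^-1)) => z; case: z => k hk.
  apply: DT hk => //.
  rewrite /ppow; have -> : (p%:R : A) ^ (Posz k) = (p ^ k)%:R by rewrite natrX.
  exact: D1n.
set K := (p ^ k.+1)%N.
have hK : (p%:R : A) ^ (Negz k) = (K%:R)^-1 by rewrite /K natrX.
have hKu : (K%:R : A) \is a GRing.unit by apply: natr_unit => //; rewrite expn_gt0 prime_gt0.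
rewrite /ppow hK in hk.
have := DMr hd (K%:R) hk; rewrite mulVr // => h1.
have hc : coprimez (m%:Z) (K%:Z) by rewrite coprimezE !absz_nat coprime_sym coprimeXl.
case/coprimezP: hc => [[u v]] /= huv.
have huvA : u%:~R * (m%:R : A) + v%:~R * K%:R = 1.
  have := congr1 (fun z : int => (z%:~R : A)) huv.
  by rewrite rmorphD !rmorphM /= !pmulrn rmorph1.
have -> : (m%:R : A)^-1 = u%:~R + v%:~R * ((m%:R)^-1 * K%:R).
  have e : (m%:R : A)^-1 = (u%:~R * m%:R + v%:~R * K%:R) * (m%:R)^-1 by rewrite huvA mul1r.
  rewrite {1}e mulrDl -mulrA mulrV // mulr1.
  by rewrite [_^-1 * _]mulrC mulrA.
apply: DD => //; first exact: D1z.
apply: D1M => //; exact: D1z.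
Qed.

Lemma D1sign (A : comUnitRingType) (dv : A -> A -> Prop) (hd : divisibility dv) (b : bool) :
  dv 1 ((-1) ^+ b).
Proof. case: b => /=; rewrite ?expr1 ?expr0; [apply: DN => //|]; by case: hd. Qed.

Lemma intrn (A : comUnitRingType) (k : nat) : ((k%:Z)%:~R : A) = k%:R.
Proof. by []. Qed.

Lemma decomp (A : comUnitRingType) (p : nat) (hp : prime p)
  (hQ : forall n : nat, (n.+1%:R : A) \is a GRing.unit)
  (dv : A -> A -> Prop) (hd : divisibility dv) (harch : p_archimedean p dv) (r : rat) :
  r != 0 -> exists u w : A,
    [/\ u * w = 1, dv 1 u, dv 1 w & ratr r = ppow A p (padic_val p r) * u].
Proof.
move=> r0.
have N0 : (0 < `|numq r|%N)%N by rewrite absz_gt0 numq_eq0.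
have D0' : (0 < `|denq r|%N)%N by rewrite absz_gt0 denq_eq0.
case: (pfactor_coprime hp N0) => m1 cop1 hN.
case: (pfactor_coprime hp D0') => m2 cop2 hD.
have m10 : (0 < m1)%N by move: N0; rewrite hN muln_gt0 => /andP[].
have m20 : (0 < m2)%N by move: D0'; rewrite hD muln_gt0 => /andP[].
have hu1 := natr_unit hQ m10.
have hu2 := natr_unit hQ m20.
have hpu : (p%:R : A) \is a GRing.unit by apply: natr_unit => //; exact: prime_gt0.
set s : A := (-1) ^+ (numq r < 0)%R.
exists (s * m1%:R * (m2%:R)^-1), (s * m2%:R * (m1%:R)^-1); split.
- have -> : s * m1%:R * (m2%:R)^-1 * (s * m2%:R * (m1%:R)^-1)
     = (s * s) * (m1%:R * (m1%:R)^-1) * (m2%:R * (m2%:R)^-1) by ring.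
  by rewrite !mulrV // !mulr1 /s -signr_addb addbb expr0.
- apply: D1M => //; last exact: (inv1 hp hQ hd harch m20 cop2).
  apply: D1M => //; [exact: D1sign | exact: D1n].
- apply: D1M => //; last exact: (inv1 hp hQ hd harch m10 cop1).
  apply: D1M => //; [exact: D1sign | exact: D1n].
have hn : ((numq r)%:~R : A) = s * (m1%:R * (p%:R) ^+ logn p `|numq r|).
  rewrite {1}[numq r]numEsign rmorphM /= rmorph_sign -abszE intrn.
  by rewrite {1}hN natrM natrX.
have hd' : ((denq r)%:~R : A) = m2%:R * (p%:R) ^+ logn p `|denq r|.
  rewrite -[denq r](gez0_abs (denq_ge0 r)) intrn.
  by rewrite {1}hD natrM natrX.
rewrite /ratr hn hd' /ppow /padic_val exprzDr // -exprnN.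
have hpc : ((p%:R : A) ^+ logn p `|denq r|) \is a GRing.unit by rewrite unitrX.
rewrite invrM //.
set a := logn p `|numq r|%N; set c := logn p `|denq r|%N.
rewrite (_ : (p%:R : A) ^ (Posz a) = p%:R ^+ a) //.
ring.
Qed.

Lemma part_d (A : comUnitRingType) (p : nat) (hp : prime p)
  (hQ : forall n : nat, (n.+1%:R : A) \is a GRing.unit)
  (dv : A -> A -> Prop) (hd : divisibility dv) (harch : p_archimedean p dv) (r : rat) a :
  pnorm p dv (ratr r * a) = padic_abs p r * pnorm p dv a.
Proof.
have hpu : (p%:R : A) \is a GRing.unit by apply: natr_unit => //; exact: prime_gt0.
have hpq : (p%:R : rat) \is a GRing.unit by rewrite unitfE pnatr_eq0 -lt0n prime_gt0.
case: (eqVneq r 0) => [->|r0].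
  rewrite /padic_abs eqxx mul0r (_ : ratr 0 = 0) ?mul0r; last by rewrite /ratr /= mul0r.
  apply: pnorm_none => m; exact: D0.
case: (decomp hp hQ hd harch r0) => u [w [huw hu hw hr]].
set v := padic_val p r.
have shift : forall m, dv (ppow A p m) (ratr r * a) <-> dv (ppow A p (m - v)) a.
  move=> m; rewrite hr (_ : ppow A p v * u * a = u * (ppow A p v * a)); last first.
    by rewrite [ppow A p v * u]mulrC -mulrA.
  rewrite -(@Dunit1 _ _ hd _ _ _ _ huw hu hw).
  have hcw : ppow A p (- v) * ppow A p v = 1 by rewrite -(ppowD hp hQ) addNr /ppow expr0z.
  rewrite (@Dscale _ _ hd _ _ _ _ hcw). have e1 : ppow A p m * ppow A p (- v) = ppow A p (m - v) by rewrite (ppowD hp hQ).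
  have e2 : ppow A p v * a * ppow A p (- v) = a.
    by rewrite mulrAC -(ppowD hp hQ) addrN /ppow expr0z mul1r.
  by rewrite e1 e2.
rewrite /padic_abs (negbTE r0) -/v.
case: (ord_cases hp hQ hd harch a) => [[m0 hm]|hall].
  rewrite (pnorm_some hm).
  have hm' : is_max_ord p dv (ratr r * a) (m0 + v).
    case: hm => h1 h2; split; first by apply/shift; rewrite addrK.
    move=> m' /shift /h2; by rewrite lerBlDr.
  by rewrite (pnorm_some hm') opprD exprzDr // mulrC.
rewrite (pnorm_none hall) mulr0; apply: pnorm_none => m; apply/shift; exact: hall.
Qed.

Lemma pnorm1 (A : comUnitRingType) (p : nat) (hp : prime p)
  (hQ : forall n : nat, (n.+1%:R : A) \is a GRing.unit)
  (dv : A -> A -> Prop) (hdv : p_divisibility p dv) :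
  pnorm p dv 1 = 1.
Proof.
case: (hdv) => hd h6 _.
have hm : is_max_ord p dv 1 0.
  split; first by rewrite /ppow expr0z; case: hd.
  move=> m' hm'; rewrite leNgt; apply/negP => hlt.
  have : dv (ppow A p 1) 1 by apply: (ppow_down hp hQ hd _ hm'); rewrite -lezD1 add0r in hlt.
  rewrite /ppow expr1z => h.
  apply: (h6 1); first by case: hd.
  by rewrite mulr1.
by rewrite (pnorm_some hm) oppr0 expr0z.
Qed.

Theorem lemma4p2 (p : nat) (hp : prime p) (A : comUnitRingType)
  (hQ : forall n : nat, (n.+1%:R : A) \is a GRing.unit)
  (dv : A -> A -> Prop)
  (hdv : p_divisibility p dv) (harch : p_archimedean p dv) :
  forall (a b : A) (r : rat),
  [/\ pnorm p dv (a + b) <= Num.max (pnorm p dv a) (pnorm p dv b),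
      pnorm p dv (a * b) <= pnorm p dv a * pnorm p dv b,
      pnorm p dv (ratr r) = padic_abs p r &
      pnorm p dv (ratr r * a) = padic_abs p r * pnorm p dv a].
Proof.
move=> a b r.
have hd : divisibility dv by case: hdv.
split.
- exact: part_a.
- exact: part_b.
- by rewrite -[ratr r]mulr1 part_d // (pnorm1 hp hQ hdv) mulr1.
- exact: part_d.
Qed.
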